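(* Let $p,q\in\mathbb R^3$ with $|p|\ge\frac32q^0$ and $\omega\in\mathbb S^2$. Then for any multi-index $\beta\in\mathbb N^3\setminus\{0\}$ (derivatives $\partial_\beta$ in $p$) there exists an integer $n=n(\beta)\ge1$ such that $$\frac{|\partial_\beta(v_\phi\chi_{A^c})|}{|v_\phi|}+|\partial_\beta p'|+|\partial_\beta q'|\lesssim\langle q\rangle^n.$$
   Context: $\mathfrak c\ge1$ is the speed of light; $p^0=\sqrt{\mathfrak c^2+|p|^2}$, $q^0=\sqrt{\mathfrak c^2+|q|^2}$, $\langle q\rangle=\sqrt{1+|q|^2}$; $\mathfrak s=2(p^0q^0-p\cdot q+\mathfrak c^2)$, $g=\sqrt{2(p^0q^0-p\cdot q-\mathfrak c^2)}$, $v_\phi=\frac{\mathfrak c}4\frac{g\sqrt{\mathfrak s}}{p^0q^0}$, $\gamma_0=(p^0+q^0)/\sqrt{\mathfrak s}$, and $p'=\frac12(p+q)+\frac12g\big(\omega+(\gamma_0-1)(p+q)\frac{(p+q)\cdot\omega}{|p+q|^2}\big)$, $q'=\frac12(p+q)-\frac12g\big(\omega+(\gamma_0-1)(p+q)\frac{(p+q)\cdot\omega}{|p+q|^2}\big)$. Let $\chi\in C_0^\infty([0,\infty))$ with $0\le\chi\le1$, $\chi(r)=1$ on $[0,1]$, $\chi(r)=0$ for $r>2$, and $\chi_{A^c}(p,q)=\big(1-\chi(\frac{p^0}{\mathfrak c})\big)\big(1-\chi(\frac23\frac{|p|}{q^0})\big)$. Implicit constants are independent of $\mathfrak c$, $p$,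 $q$, $\omega$. *)

(* Defs.v *)
From Stdlib Require Import Reals.
From Coquelicot Require Import Coquelicot.
Open Scope R_scope.

Definition vec3 : Type := (R * R * R)%type.
Definition v1 (x : vec3) : R := fst (fst x).
Definition v2 (x : vec3) : R := snd (fst x).
Definition v3 (x : vec3) : R := snd x.
Definition mk3 (a b c : R) : vec3 := (a, b, c).
Definition vadd (x y : vec3) : vec3 := mk3 (v1 x + v1 y) (v2 x + v2 y) (v3 x + v3 y).
Definition vscal (a : R) (x : vec3) : vec3 := mk3 (a * v1 x) (a * v2 x) (a * v3 x).
Definition dot (x y : vec3) : R := v1 x * v1 y + v2 x * v2 y + v3 x * v3 y.
Definition vnorm (x : vec3) : R := sqrt (dot x x).

(* p^0 = sqrt(c^2+|p|^2), <q> = sqrt(1+|q|^2) *)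
Definition en (c : R) (p : vec3) : R := sqrt (c ^ 2 + dot p p).
Definition jap (q : vec3) : R := sqrt (1 + dot q q).

Definition s_inv (c : R) (p q : vec3) : R := 2 * (en c p * en c q - dot p q + c ^ 2).
Definition g_rel (c : R) (p q : vec3) : R := sqrt (2 * (en c p * en c q - dot p q - c ^ 2)).
Definition v_phi (c : R) (p q : vec3) : R :=
  c / 4 * (g_rel c p q * sqrt (s_inv c p q)) / (en c p * en c q).
Definition gamma0 (c : R) (p q : vec3) : R := (en c p + en c q) / sqrt (s_inv c p q).

Definition post_dir (c : R) (p q w : vec3) : vec3 :=
  vadd w (vscal ((gamma0 c p q - 1) * dot (vadd p q) w / (vnorm (vadd p q)) ^ 2) (vadd p q)).
Definition p_post (c : R) (p q w : vec3) : vec3 :=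
  vadd (vscal (1/2) (vadd p q)) (vscal (1/2 * g_rel c p q) (post_dir c p q w)).
Definition q_post (c : R) (p q w : vec3) : vec3 :=
  vadd (vscal (1/2) (vadd p q)) (vscal (- (1/2 * g_rel c p q)) (post_dir c p q w)).

Definition chi_Ac (chi : R -> R) (c : R) (p q : vec3) : R :=
  (1 - chi (en c p / c)) * (1 - chi (2 / 3 * vnorm p / en c q)).

Definition d1 (f : vec3 -> R) (p : vec3) : R := Derive (fun t => f (mk3 t (v2 p) (v3 p))) (v1 p).
Definition d2 (f : vec3 -> R) (p : vec3) : R := Derive (fun t => f (mk3 (v1 p) t (v3 p))) (v2 p).
Definition d3 (f : vec3 -> R) (p : vec3) : R := Derive (fun t => f (mk3 (v1 p) (v2 p) t)) (v3 p).

Definition multi_index : Type := (nat * nat * nat)%type.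
Definition dbeta (b : multi_index) (f : vec3 -> R) : vec3 -> R :=
  Nat.iter (fst (fst b)) d1 (Nat.iter (snd (fst b)) d2 (Nat.iter (snd b) d3 f)).
Definition dbeta_vec (b : multi_index) (F : vec3 -> vec3) (p : vec3) : vec3 :=
  mk3 (dbeta b (fun x => v1 (F x)) p) (dbeta b (fun x => v2 (F x)) p)
      (dbeta b (fun x => v3 (F x)) p).

(* chi in C_0^infty([0,oo)), 0<=chi<=1, chi=1 on [0,1], chi=0 on (2,oo).
   Smoothness is required on all of R (any such chi extends smoothly,
   e.g. by 1 on (-oo,0)); values on negative reals are never used. *)
Definition cutoff (chi : R -> R) : Prop :=
  (forall k x, ex_derive_n chi k x) /\
  (forall r, 0 <= r -> 0 <= chi r <= 1) /\
  (forall r, 0 <= r <= 1 -> chi r = 1) /\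
  (forall r, 2 < r -> chi r = 0).

(* Main.v *)
Require Import Defs.
From Stdlib Require Import Reals Lra Psatz.
From Coquelicot Require Import Coquelicot.
Open Scope R_scope.

Definition Fam := R -> vec3 -> vec3 -> vec3 -> R.

Definition lin (i : nat) (p : vec3) (t : R) : vec3 :=
  match i with 0%nat => mk3 t (v2 p) (v3 p) | 1%nat => mk3 (v1 p) t (v3 p) | _ => mk3 (v1 p) (v2 p) t end.
Definition coord (i : nat) (p : vec3) : R :=
  match i with 0%nat => v1 p | 1%nat => v2 p | _ => v3 p end.
Definition dd (i : nat) (f : vec3 -> R) (p : vec3) : R := Derive (fun t => f (lin i p t)) (coord i p).

Lemma lin_coord i p : lin i p (coord i p) = p.
Proof. destruct p as [[a b] c]; destruct i as [|[|i]]; reflexivity. Qed.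

Definition inU (c : R) (q p : vec3) : Prop := 1 <= c /\ en c q < vnorm p.
Definition Reg (c : R) (q w p : vec3) : Prop := 1 <= c /\ 3/2 * en c q <= vnorm p /\ vnorm w = 1.

Definition W (c : R) (p : vec3) (d m : R) : R := Rpower c d * Rpower (en c p / c) m.

Definition bnd (F : Fam) (d m : R) : Prop :=
  exists C : R, exists n : nat, 0 <= C /\
  forall c q w p, Reg c q w p -> Rabs (F c q w p) <= C * jap q ^ n * W c p d m.

Fixpoint Sym (k : nat) (d m : R) (F : Fam) : Prop :=
  match k with
  | 0%nat => bnd F d m
  | S k' => bnd F d m /\
      (forall c q w p i, inU c q p -> ex_derive (fun t => F c q w (lin i p t)) (coord i p)) /\
      (forall i, Sym k' (d - 1) (m - 1) (fun c q w => dd i (F c q w)))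
  end.

Definition fmul (F G : Fam) : Fam := fun c q w x => F c q w x * G c q w x.
Definition fadd (F G : Fam) : Fam := fun c q w x => F c q w x + G c q w x.
Definition finv (F : Fam) : Fam := fun c q w x => / F c q w x.
Definition fsqrt (F : Fam) : Fam := fun c q w x => sqrt (F c q w x).
Definition fconst (K : R -> vec3 -> vec3 -> R) : Fam := fun c q w x => K c q w.

Lemma dot_ge0 x : 0 <= dot x x.
Proof. unfold dot; nra. Qed.

Lemma en_pos c p : 1 <= c -> 0 < en c p.
Proof. intro; unfold en; apply sqrt_lt_R0; pose proof (dot_ge0 p); nra. Qed.

Lemma en_sq c p : en c p ^ 2 = c ^ 2 + dot p p.
Proof. unfold en; rewrite pow2_sqrt; auto; pose proof (dot_ge0 p); nra. Qed.

Lemma vnorm_sq x : vnorm x ^ 2 = dot x x.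
Proof. unfold vnorm; rewrite pow2_sqrt; auto using dot_ge0. Qed.

Lemma vnorm_ge0 x : 0 <= vnorm x.
Proof. apply sqrt_pos. Qed.

Lemma en_ge_c c p : 1 <= c -> c <= en c p.
Proof. intro. pose proof (en_sq c p); pose proof (dot_ge0 p); pose proof (en_pos c p H). nra. Qed.

Lemma vnorm_le_en c p : 1 <= c -> vnorm p <= en c p.
Proof. intro. pose proof (en_sq c p); pose proof (vnorm_sq p); pose proof (en_pos c p H); pose proof (vnorm_ge0 p). nra. Qed.

Lemma Reg_inU c q w p : Reg c q w p -> inU c q p.
Proof. intros [H1 [H2 H3]]; split; auto. pose proof (en_pos c q H1); lra. Qed.

Lemma rho_ge1 c p : 1 <= c -> 1 <= en c p / c.
Proof. intro. pose proof (en_ge_c c p H). apply (Rmult_le_reg_r c); [lra|]. field_simplify; lra. Qed.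

Lemma W_pos c p d m : 1 <= c -> 0 < W c p d m.
Proof. intro; unfold W, Rpower; apply Rmult_lt_0_compat; apply exp_pos. Qed.

Lemma jap_ge1 q : 1 <= jap q.
Proof. unfold jap. rewrite <- sqrt_1 at 1. apply sqrt_le_1_alt. pose proof (dot_ge0 q); lra. Qed.

Lemma W_mono c p d m d' m' : 1 <= c -> d <= d' -> m <= m' -> W c p d m <= W c p d' m'.
Proof.
  intros Hc Hd Hm; unfold W.
  apply Rmult_le_compat; try (unfold Rpower; left; apply exp_pos).
  apply Rle_Rpower; auto. apply Rle_Rpower; auto using rho_ge1.
Qed.

Lemma W_add c p d1 m1 d2 m2 : W c p (d1 + d2) (m1 + m2) = W c p d1 m1 * W c p d2 m2.
Proof. unfold W; rewrite !Rpower_plus; ring. Qed.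

Lemma W_int c p (a b : Z) : 1 <= c -> W c p (IZR a) (IZR b) = powerRZ c a * powerRZ (en c p / c) b.
Proof.
  intro; unfold W. pose proof (rho_ge1 c p H).
  rewrite (powerRZ_Rpower c), (powerRZ_Rpower (en c p / c)); auto; lra.
Qed.

Lemma ex_derive_vnorm_lin i p : 0 < dot p p -> ex_derive (fun t => vnorm (lin i p t)) (coord i p).
Proof.
  intro H. destruct p as [[a b] c0]; destruct i as [|[|i]]; unfold vnorm, dot, lin, coord, mk3, v1, v2, v3 in *; simpl in *.
  all: auto_derive; lra.
Qed.

Lemma inU_loc c q p i : inU c q p -> locally (coord i p) (fun t => inU c q (lin i p t)).
Proof.
  intros [Hc Hp].
  assert (Hd : 0 < dot p p).
  { pose proof (en_pos c q Hc). pose proof (vnorm_sq p). nra. }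
  pose proof (ex_derive_continuous _ _ (ex_derive_vnorm_lin i p Hd)) as Hcont.
  unfold continuous in Hcont. rewrite lin_coord in Hcont.
  assert (He : 0 < vnorm p - en c q) by lra.
  generalize (proj1 (filterlim_locally _ _) Hcont (mkposreal _ He)).
  apply filter_imp. intros t Ht. split; auto.
  change (Rabs (vnorm (lin i p t) - vnorm p) < vnorm p - en c q) in Ht.
  apply Rabs_def2 in Ht. lra.
Qed.

Lemma bnd_ext d m (F G : Fam) : (forall c q w p, inU c q p -> F c q w p = G c q w p) -> bnd F d m -> bnd G d m.
Proof.
  intros HFG [C [n [HC HB]]]; exists C, n; split; auto; intros c q w p HR.
  rewrite <- HFG; auto. eapply Reg_inU; eauto.
Qed.

Lemma Sym_ext k : forall d m (F G : Fam), (forall c q w p, inU c q p -> F c q w p = G c q w p) -> Sym k d m F -> Sym k d m G.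
Proof.
  induction k; intros d m F G HFG HF.
  - eapply bnd_ext; eauto.
  - destruct HF as [Hb [Hd Hs]]; split; [eapply bnd_ext; eauto| split].
    + intros c q w p i Hu. eapply ex_derive_ext_loc; [| apply (Hd c q w p i Hu)].
      generalize (inU_loc c q p i Hu); apply filter_imp; intros t Ht; apply HFG; auto.
    + intro i. refine (IHk _ _ _ _ _ (Hs i)). intros c q w p Hu. unfold dd.
      apply Derive_ext_loc.
      generalize (inU_loc c q p i Hu); apply filter_imp; intros t Ht; apply HFG; auto.
Qed.

Lemma Sym_bnd k d m F : Sym k d m F -> bnd F d m.
Proof. destruct k; simpl; tauto. Qed.

Lemma Sym_S k : forall d m F, Sym (S k) d m F -> Sym k d m F.
Proof.
  induction k; intros d m F H.
  - exact (proj1 H).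
  - destruct H as [Hb [Hd Hs]]. refine (conj Hb (conj Hd _)). intro i; apply IHk, Hs.
Qed.

Lemma Sym_le k k' d m F : (k <= k')%nat -> Sym k' d m F -> Sym k d m F.
Proof. induction 1; auto. intro; apply IHle; apply Sym_S; auto. Qed.

Lemma bnd_w d m d' m' F : d <= d' -> m <= m' -> bnd F d m -> bnd F d' m'.
Proof.
  intros Hd Hm [C [n [HC HB]]]; exists C, n; split; auto; intros c q w p HR.
  eapply Rle_trans; [apply HB; auto|]. apply Rmult_le_compat_l.
  apply Rmult_le_pos; auto. apply pow_le. pose proof (jap_ge1 q); lra.
  apply W_mono; auto. apply HR.
Qed.

Lemma Sym_w k : forall d m d' m' F, d <= d' -> m <= m' -> Sym k d m F -> Sym k d' m' F.
Proof.
  induction k; intros d m d' m' F Hd Hm HF.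
  - eapply bnd_w; eauto.
  - destruct HF as [Hb [Hx Hs]]; split; [eapply bnd_w; eauto| split; auto].
    intro i; eapply IHk; [| | apply Hs]; lra.
Qed.

Lemma Sym_eq k d m d' m' F : d = d' -> m = m' -> Sym k d m F -> Sym k d' m' F.
Proof. intros; subst; auto. Qed.

Lemma bnd_add d m F G : bnd F d m -> bnd G d m -> bnd (fadd F G) d m.
Proof.
  intros [C1 [n1 [HC1 HB1]]] [C2 [n2 [HC2 HB2]]].
  exists (C1 + C2), (n1 + n2)%nat; split; [lra|]. intros c q w p HR.
  unfold fadd. eapply Rle_trans; [apply Rabs_triang|].
  pose proof (HB1 c q w p HR); pose proof (HB2 c q w p HR).
  pose proof (jap_ge1 q).
  assert (jap q ^ n1 <= jap q ^ (n1 + n2)) by (apply Rle_pow; auto; lia).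
  assert (jap q ^ n2 <= jap q ^ (n1 + n2)) by (apply Rle_pow; auto; lia).
  pose proof (W_pos c p d m (proj1 HR)).
  assert (C1 * jap q ^ n1 * W c p d m <= C1 * jap q ^ (n1+n2) * W c p d m)
    by (apply Rmult_le_compat_r; [lra|]; apply Rmult_le_compat_l; auto).
  assert (C2 * jap q ^ n2 * W c p d m <= C2 * jap q ^ (n1+n2) * W c p d m)
    by (apply Rmult_le_compat_r; [lra|]; apply Rmult_le_compat_l; auto).
  nra.
Qed.

Lemma dd_add i (F G : vec3 -> R) p :
  ex_derive (fun t => F (lin i p t)) (coord i p) -> ex_derive (fun t => G (lin i p t)) (coord i p) ->
  dd i (fun x => F x + G x) p = dd i F p + dd i G p.
Proof. intros; unfold dd; apply Derive_plus; auto. Qed.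

Lemma dd_mul i (F G : vec3 -> R) p :
  ex_derive (fun t => F (lin i p t)) (coord i p) -> ex_derive (fun t => G (lin i p t)) (coord i p) ->
  dd i (fun x => F x * G x) p = dd i F p * G p + F p * dd i G p.
Proof. intros; unfold dd; rewrite Derive_mult; auto. rewrite lin_coord; auto. Qed.

Lemma Sym_add k : forall d m F G, Sym k d m F -> Sym k d m G -> Sym k d m (fadd F G).
Proof.
  induction k; intros d m F G HF HG.
  - apply bnd_add; auto.
  - destruct HF as [Hb [Hx Hs]]; destruct HG as [Hb' [Hx' Hs']].
    split; [apply bnd_add; auto| split].
    + intros; unfold fadd; apply (ex_derive_plus (fun t => F c q w (lin i p t)) (fun t => G c q w (lin i p t))); auto.
    + intro i. apply (Sym_ext _ _ _ (fadd (fun c q w => dd i (F c q w)) (fun c q w => dd i (G c q w)))).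
      intros c q w p Hu; unfold fadd; symmetry; apply dd_add; auto.
      apply IHk; auto.
Qed.

Lemma bnd_mul d1 m1 d2 m2 F G : bnd F d1 m1 -> bnd G d2 m2 -> bnd (fmul F G) (d1 + d2) (m1 + m2).
Proof.
  intros [C1 [n1 [HC1 HB1]]] [C2 [n2 [HC2 HB2]]].
  exists (C1 * C2), (n1 + n2)%nat; split; [nra|]. intros c q w p HR.
  unfold fmul. rewrite Rabs_mult, W_add, pow_add.
  pose proof (HB1 c q w p HR); pose proof (HB2 c q w p HR).
  replace (C1 * C2 * (jap q ^ n1 * jap q ^ n2) * (W c p d1 m1 * W c p d2 m2)) with
    ((C1 * jap q ^ n1 * W c p d1 m1) * (C2 * jap q ^ n2 * W c p d2 m2)) by ring.
  apply Rmult_le_compat; auto; apply Rabs_pos.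
Qed.

Lemma Sym_mul k : forall d1 m1 d2 m2 F G, Sym k d1 m1 F -> Sym k d2 m2 G -> Sym k (d1 + d2) (m1 + m2) (fmul F G).
Proof.
  induction k; intros d1 m1 d2 m2 F G HF HG.
  - apply bnd_mul; auto.
  - pose proof (Sym_S _ _ _ _ HF) as HF0; pose proof (Sym_S _ _ _ _ HG) as HG0.
    destruct HF as [Hb [Hx Hs]]; destruct HG as [Hb' [Hx' Hs']].
    split; [apply bnd_mul; auto| split].
    + intros; unfold fmul; apply (ex_derive_mult (fun t => F c q w (lin i p t)) (fun t => G c q w (lin i p t))); auto.
    + intro i. apply (Sym_ext _ _ _ (fadd (fmul (fun c q w => dd i (F c q w)) G) (fmul F (fun c q w => dd i (G c q w))))).
      intros c q w p Hu; unfold fadd, fmul; symmetry; apply dd_mul; auto.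
      apply Sym_add.
      * apply (Sym_eq _ (d1 - 1 + d2) (m1 - 1 + m2)); try ring. apply IHk; auto.
      * apply (Sym_eq _ (d1 + (d2 - 1)) (m1 + (m2 - 1))); try ring. apply IHk; auto.
Qed.

Lemma bnd_zero d m : bnd (fconst (fun _ _ _ => 0)) d m.
Proof.
  exists 0, 0%nat; split; [lra|]; intros. unfold fconst; rewrite Rabs_R0.
  pose proof (W_pos c p d m (proj1 H)); simpl; nra.
Qed.

Lemma Sym_const k : forall d m K, bnd (fconst K) d m -> Sym k d m (fconst K).
Proof.
  induction k; intros d m K HK; auto.
  split; auto; split.
  - intros; unfold fconst; apply ex_derive_const.
  - intro i. apply (Sym_ext _ _ _ (fconst (fun _ _ _ => 0))).
    intros; unfold fconst, dd; rewrite Derive_const; auto.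
    apply IHk, bnd_zero.
Qed.

Lemma bnd_one : bnd (fconst (fun _ _ _ => 1)) 0 0.
Proof.
  exists 1, 0%nat; split; [lra|]; intros. unfold fconst, W; rewrite Rabs_R1.
  destruct H as [Hc _]. pose proof (rho_ge1 c p Hc).
  rewrite (Rpower_O c), (Rpower_O (en c p / c)) by lra. lra.
Qed.

Lemma coord_le x j : Rabs (coord j x) <= vnorm x.
Proof.
  unfold vnorm, dot. rewrite <- sqrt_Rsqr_abs. apply sqrt_le_1_alt. unfold Rsqr.
  destruct j as [|[|j]]; simpl; nra.
Qed.

Lemma W11 c p : 1 <= c -> W c p 1 1 = en c p.
Proof.
  intro. rewrite (W_int c p 1 1); auto. simpl. field. lra.
Qed.

Lemma Sym_coord k j : Sym k 1 1 (fun c q w x => coord j x).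
Proof.
  revert j; induction k; intro j.
  - exists 1, 0%nat; split; [lra|]; intros c q w p HR. rewrite W11 by apply HR.
    simpl. pose proof (coord_le p j). pose proof (vnorm_le_en c p (proj1 HR)). lra.
  - split; [apply (Sym_bnd _ _ _ _ (IHk j))| split].
    + intros. destruct i as [|[|i]]; destruct j as [|[|j]]; simpl; unfold v1, v2, v3, mk3; simpl;
        first [exact (ex_derive_const _ _) | exact (ex_derive_id _)].
    + intro i. replace (1 - 1) with 0 by ring.
      destruct (Nat.eq_dec (Nat.min i 2) (Nat.min j 2)) as [E|E].
      * apply (Sym_ext _ _ _ (fconst (fun _ _ _ => 1))).
        intros c q w p _. unfold fconst, dd.
        destruct i as [|[|i]]; destruct j as [|[|j]]; simpl in E; try lia; simpl; unfold v1, v2, v3, mk3; simpl;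
          symmetry; apply Derive_id.
        apply Sym_const, bnd_one.
      * apply (Sym_ext _ _ _ (fconst (fun _ _ _ => 0))).
        intros c q w p _. unfold fconst, dd.
        destruct i as [|[|i]]; destruct j as [|[|j]]; simpl in E; try lia; simpl; unfold v1, v2, v3, mk3; simpl;
          symmetry; apply Derive_const.
        apply Sym_const, bnd_zero.
Qed.

Lemma bnd_num r : bnd (fconst (fun _ _ _ => r)) 0 0.
Proof.
  exists (Rabs r), 0%nat; split; [apply Rabs_pos|]; intros. unfold fconst, W.
  destruct H as [Hc _]. pose proof (rho_ge1 c p Hc).
  rewrite (Rpower_O c), (Rpower_O (en c p / c)) by lra. simpl; lra.
Qed.

Lemma Sym_num k r : Sym k 0 0 (fconst (fun _ _ _ => r)).
Proof. apply Sym_const, bnd_num. Qed.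

Lemma Sym_inv k : forall d m F, (forall c q w p, inU c q p -> F c q w p <> 0) ->
  Sym k d m F -> bnd (finv F) (-d) (-m) -> Sym k (-d) (-m) (finv F).
Proof.
  induction k; intros d m F HF0 HF Hb; auto.
  pose proof (Sym_S _ _ _ _ HF) as HFk.
  destruct HF as [HbF [Hx Hs]]. split; auto. split.
  - intros c q w p i Hu. unfold finv. apply (ex_derive_inv (fun t => F c q w (lin i p t))); auto.
    rewrite lin_coord; auto.
  - intro i.
    apply (Sym_ext _ _ _ (fmul (fmul (fconst (fun _ _ _ => -1)) (fun c q w => dd i (F c q w))) (fmul (finv F) (finv F)))).
    + intros c q w p Hu. unfold fmul, fconst, finv, dd.
      rewrite (Derive_inv (fun t => F c q w (lin i p t))); rewrite ?lin_coord; auto.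
      field. auto.
    + apply (Sym_eq _ ((0 + (d - 1)) + (-d + -d)) ((0 + (m - 1)) + (-m + -m))); try ring.
      apply Sym_mul; apply Sym_mul; auto. apply Sym_num.
Qed.

Lemma bnd_sqrt d m F : bnd F d m -> bnd (fsqrt F) (d/2) (m/2).
Proof.
  intros [C [n [HC HB]]]. exists (sqrt C), n; split; [apply sqrt_pos|].
  intros c q w p HR. unfold fsqrt. rewrite Rabs_pos_eq by apply sqrt_pos.
  pose proof (HB c q w p HR) as H.
  assert (Hs : sqrt (F c q w p) <= sqrt (C * jap q ^ n * W c p d m)).
  { apply sqrt_le_1_alt. pose proof (Rle_abs (F c q w p)); lra. }
  eapply Rle_trans; [apply Hs|].
  destruct HR as [Hc _]. pose proof (rho_ge1 c p Hc).
  pose proof (jap_ge1 q).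
  assert (HJ : 1 <= jap q ^ n) by (apply pow_R1_Rle; auto).
  assert (Hw : sqrt (W c p d m) = W c p (d/2) (m/2)).
  { unfold W. assert (0 < Rpower c d) by (unfold Rpower; apply exp_pos).
    assert (0 < Rpower (en c p / c) m) by (unfold Rpower; apply exp_pos).
    rewrite sqrt_mult by lra.
    rewrite <- (Rpower_sqrt (Rpower c d)), <- (Rpower_sqrt (Rpower (en c p / c) m)) by auto.
    rewrite !Rpower_mult. reflexivity. }
  rewrite sqrt_mult, sqrt_mult, Hw; try (apply Rmult_le_pos); try lra; try (left; apply W_pos; auto).
  apply Rmult_le_compat_r; [left; apply W_pos; auto|].
  apply Rmult_le_compat_l; [apply sqrt_pos|].
  assert (sqrt (jap q ^ n) * sqrt (jap q ^ n) = jap q ^ n) by (apply sqrt_sqrt; lra).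
  assert (1 <= sqrt (jap q ^ n)) by (rewrite <- sqrt_1; apply sqrt_le_1_alt; lra).
  nra.
  all: left; unfold Rpower; apply exp_pos.
Qed.

Lemma Sym_sqrt k : forall d m F, (forall c q w p, inU c q p -> 0 < F c q w p) ->
  Sym k d m F -> bnd (finv F) (-d) (-m) -> Sym k (d/2) (m/2) (fsqrt F).
Proof.
  induction k; intros d m F HF0 HF Hb.
  - apply bnd_sqrt; auto.
  - pose proof (Sym_S _ _ _ _ HF) as HFk.
    pose proof (Sym_inv _ _ _ _ (fun c q w p H => Rgt_not_eq _ _ (HF0 c q w p H)) HFk Hb) as HI.
    destruct HF as [HbF [Hx Hs]]. split; [apply bnd_sqrt; auto|]. split.
    + intros c q w p i Hu. unfold fsqrt.
      eexists. apply (is_derive_sqrt (fun t => F c q w (lin i p t))).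
      apply Derive_correct; auto. rewrite lin_coord; auto.
    + intro i.
      apply (Sym_ext _ _ _ (fmul (fmul (fconst (fun _ _ _ => /2)) (fun c q w => dd i (F c q w))) (fmul (finv F) (fsqrt F)))).
      * intros c q w p Hu. unfold fmul, fconst, finv, fsqrt, dd; cbv beta.
        assert (Hpos : 0 < F c q w (lin i p (coord i p))) by (rewrite lin_coord; auto).
        symmetry. etransitivity. apply (is_derive_unique _ _ _ (is_derive_sqrt (fun t => F c q w (lin i p t)) _ _
           (Derive_correct _ _ (Hx c q w p i Hu)) Hpos)).
        rewrite lin_coord. pose proof (HF0 c q w p Hu) as Hp.
        assert (Hs0 : 0 < sqrt (F c q w p)) by (apply sqrt_lt_R0; auto).
        pose proof (sqrt_sqrt (F c q w p) ltac:(lra)) as Hss.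
        set (s := sqrt (F c q w p)) in *. rewrite <- Hss. unfold Rdiv.
        assert (E : forall D : R, D * / (2 * s) = / 2 * D * (/ (s * s) * s)) by (intro; field; lra).
        apply E.
      * apply (Sym_eq _ ((0 + (d - 1)) + (-d + d/2)) ((0 + (m - 1)) + (-m + m/2))); try field.
        apply Sym_mul; apply Sym_mul; auto. apply Sym_num.
Qed.

Lemma Sym_isqrt k d m F : (forall c q w p, inU c q p -> 0 < F c q w p) ->
  Sym k d m F -> bnd (finv F) (-d) (-m) -> Sym k (-(d/2)) (-(m/2)) (finv (fsqrt F)).
Proof.
  intros HF0 HF Hb. apply Sym_inv.
  - intros; unfold fsqrt; apply Rgt_not_eq, sqrt_lt_R0; auto.
  - apply Sym_sqrt; auto.
  - apply (bnd_ext _ _ (fsqrt (finv F))). intros; unfold fsqrt, finv; apply sqrt_inv.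
    apply (bnd_w (-d/2) (-m/2)); try lra. apply bnd_sqrt; auto.
Qed.

Lemma chi_zero chi (Hchi : cutoff chi) j x : 2 < x -> Derive_n chi j x = 0.
Proof.
  intro Hx. destruct Hchi as [_ [_ [_ H0]]].
  assert (Hl : locally x (fun t => chi t = (fun _ : R => 0) t)).
  { assert (He : 0 < x - 2) by lra. exists (mkposreal _ He). intros y Hy.
    change (Rabs (y - x) < x - 2) in Hy. apply Rabs_def2 in Hy. apply H0. lra. }
  destruct j. simpl. apply H0; auto.
  rewrite (Derive_n_ext_loc _ _ (S j) x Hl). apply Derive_n_const.
Qed.

Lemma chi_bound chi (Hchi : cutoff chi) j : exists M, 0 <= M /\ forall x, 0 <= x -> Rabs (Derive_n chi j x) <= M.
Proof.
  destruct (continuity_ab_maj (fun x => Rabs (Derive_n chi j x)) 0 2) as [Mx [HM _]]; [lra| |].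
  - intros c _. apply (continuity_pt_comp (Derive_n chi j) Rabs).
    + apply continuity_pt_filterlim. exact (ex_derive_continuous (Derive_n chi j) c (proj1 Hchi (S j) c)).
    + apply Rcontinuity_abs.
  - exists (Rabs (Derive_n chi j Mx)); split; [apply Rabs_pos|]. intros x Hx.
    destruct (Rle_lt_dec x 2).
    + apply HM; lra.
    + rewrite (chi_zero chi Hchi j x r), Rabs_R0. apply Rabs_pos.
Qed.

Lemma W0N c p N : 1 <= c -> W c p 0 (- INR N) = / (en c p / c) ^ N.
Proof.
  intro Hc. pose proof (rho_ge1 c p Hc). unfold W. rewrite Rpower_O by lra.
  rewrite Rpower_Ropp, Rpower_pow by lra. ring.
Qed.

Lemma Sym_chi chi (Hchi : cutoff chi) k : forall (phi : Fam), Sym k 0 1 phi ->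
  (forall c q w p, Reg c q w p -> 0 <= phi c q w p) ->
  (exists K n0, 0 <= K /\ forall c q w p, Reg c q w p -> phi c q w p <= 2 -> en c p / c <= K * jap q ^ n0) ->
  forall j N, Sym k 0 (- INR N) (fun c q w x => Derive_n chi j (phi c q w x)).
Proof.
  intros phi Hphi Hpos [K [n0 [HK HKb]]].
  assert (Hb : forall j N, bnd (fun c q w x => Derive_n chi j (phi c q w x)) 0 (- INR N)).
  { intros j N. destruct (chi_bound chi Hchi j) as [M [HM HMb]].
    exists (M * K ^ N), (n0 * N)%nat; split. apply Rmult_le_pos; auto. apply pow_le; auto.
    intros c q w p HR. destruct (Rle_lt_dec (phi c q w p) 2) as [Hle|Hlt].
    - pose proof (HKb c q w p HR Hle) as Hr. pose proof (Hpos c q w p HR). destruct HR as [Hc _].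
      rewrite W0N by auto. pose proof (rho_ge1 c p Hc).
      set (r := en c p / c) in *.
      assert (HrN : r ^ N <= K ^ N * jap q ^ (n0 * N)).
      { rewrite pow_mult, <- Rpow_mult_distr. apply pow_incr; lra. }
      assert (0 < r ^ N) by (apply pow_lt; lra).
      eapply Rle_trans; [apply HMb; auto|].
      replace (M * K ^ N * jap q ^ (n0 * N) * / r ^ N) with (M * ((K ^ N * jap q ^ (n0 * N)) / r ^ N)) by (field; lra).
      rewrite <- (Rmult_1_r M) at 1. apply Rmult_le_compat_l; auto.
      apply (Rmult_le_reg_r (r ^ N)); auto. field_simplify; lra.
    - rewrite (chi_zero chi Hchi j _ Hlt), Rabs_R0.
      apply Rmult_le_pos; [apply Rmult_le_pos|]. apply Rmult_le_pos; auto. apply pow_le; auto.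
      apply pow_le; pose proof (jap_ge1 q); lra. left; apply W_pos, HR. }
  revert phi Hphi Hpos HKb Hb. induction k; intros phi Hphi Hpos HKb Hb j N; [apply Hb|].
  simpl. split; [apply Hb|]. split.
  - intros c q w p i Hu. apply (ex_derive_comp (Derive_n chi j) (fun t => phi c q w (lin i p t))).
    exact (proj1 Hchi (S j) _). exact (proj1 (proj2 Hphi) c q w p i Hu).
  - intro i.
    apply (Sym_ext _ _ _ (fmul (fun c q w => dd i (phi c q w)) (fun c q w x => Derive_n chi (S j) (phi c q w x)))).
    + intros c q w p Hu. unfold fmul, dd. symmetry.
      etransitivity. apply (Derive_comp (Derive_n chi j) (fun t => phi c q w (lin i p t))).
      exact (proj1 Hchi (S j) _). exact (proj1 (proj2 Hphi) c q w p i Hu).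
      rewrite lin_coord. reflexivity.
    + apply (Sym_eq _ ((0 - 1) + 0) ((1 - 1) + - INR (S N))). ring. rewrite S_INR; ring.
      apply Sym_mul. apply (proj2 (proj2 Hphi)).
      apply IHk; auto. apply Sym_S; auto.
Qed.

Lemma Sym_iter i j : forall k d m F, Sym (j + k) d m F ->
  Sym k (d - INR j) (m - INR j) (fun c q w => Nat.iter j (dd i) (F c q w)).
Proof.
  induction j; intros k d m F H.
  - simpl. apply (Sym_eq _ d m); try (simpl; ring). exact H.
  - rewrite Nat.add_succ_l, <- Nat.add_succ_r in H.
    pose proof (IHj (S k) d m F H) as H1. destruct H1 as [_ [_ H2]].
    apply (Sym_eq _ (d - INR j - 1) (m - INR j - 1)); try (rewrite S_INR; ring).
    exact (H2 i).
Qed.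

Lemma Sym_dbeta b1 b2 b3 k d m F : Sym (b1 + b2 + b3 + k) d m F ->
  Sym k (d - INR (b1 + b2 + b3)) (m - INR (b1 + b2 + b3)) (fun c q w => dbeta (b1, b2, b3) (F c q w)).
Proof.
  intro H. unfold dbeta; simpl.
  change d1 with (dd 0). change d2 with (dd 1). change d3 with (dd 2).
  rewrite !plus_INR.
  apply (Sym_eq _ (d - INR b3 - INR b2 - INR b1) (m - INR b3 - INR b2 - INR b1)); try ring.
  apply (Sym_iter 0 b1 k _ _ (fun c q w => Nat.iter b2 (dd 1) (Nat.iter b3 (dd 2) (F c q w)))).
  apply (Sym_iter 1 b2 (b1 + k) _ _ (fun c q w => (Nat.iter b3 (dd 2) (F c q w)))).
  apply (Sym_iter 2 b3 (b2 + (b1 + k))).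
  replace (b3 + (b2 + (b1 + k)))%nat with (b1 + b2 + b3 + k)%nat by lia. auto.
Qed.

Lemma CS p q : Rabs (dot p q) <= vnorm p * vnorm q.
Proof.
  pose proof (vnorm_sq p); pose proof (vnorm_sq q); pose proof (vnorm_ge0 p); pose proof (vnorm_ge0 q).
  assert (H3 : (dot p q)^2 <= (vnorm p * vnorm q)^2).
  { rewrite Rpow_mult_distr, H, H0. unfold dot. destruct p as [[a1 a2] a3]; destruct q as [[b1 b2] b3].
    unfold v1, v2, v3; simpl.
    pose proof (pow2_ge_0 (a1*b2-a2*b1)); pose proof (pow2_ge_0 (a1*b3-a3*b1)); pose proof (pow2_ge_0 (a2*b3-a3*b2)).
    nra. }
  assert (0 <= vnorm p * vnorm q) by nra.
  destruct (Rle_dec 0 (dot p q)).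
  - rewrite Rabs_pos_eq by auto. nra.
  - rewrite Rabs_left by lra. nra.
Qed.

Section RegFacts.
Variables (c : R) (p q : vec3).
Hypothesis Hc : 1 <= c.
Hypothesis Hr : 3/2 * en c q <= vnorm p.

Let P := en c p.
Let Q := en c q.
Let a := vnorm p.
Let b := vnorm q.
Let J := jap q.

Lemma rf_basic : 0 < P /\ 0 < Q /\ P^2 = c^2 + a^2 /\ Q^2 = c^2 + b^2 /\ 0 <= a /\ 0 <= b /\ c <= Q /\ b <= Q /\ a <= P /\ 1 <= J /\ J^2 = 1 + b^2.
Proof.
  unfold P, Q, a, b, J. pose proof (en_pos c p Hc); pose proof (en_pos c q Hc).
  pose proof (en_sq c p); pose proof (en_sq c q); pose proof (vnorm_sq p); pose proof (vnorm_sq q).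
  pose proof (vnorm_ge0 p); pose proof (vnorm_ge0 q). pose proof (en_ge_c c q Hc).
  pose proof (vnorm_le_en c p Hc). pose proof (vnorm_le_en c q Hc). pose proof (jap_ge1 q).
  assert (jap q ^ 2 = 1 + vnorm q ^ 2).
  { unfold jap; rewrite pow2_sqrt, H4; auto. pose proof (dot_ge0 q); lra. }
  repeat split; try assumption; try lra.
Qed.

Lemma rf_QJ : Q <= c * J.
Proof.
  destruct rf_basic as [HP [HQ [HP2 [HQ2 [Ha [Hb [HcQ [HbQ [HaP [HJ HJ2]]]]]]]]]].
  assert (Q^2 <= (c*J)^2).
  { rewrite Rpow_mult_distr, HQ2, HJ2. assert (0 <= (c^2 - 1) * b^2) by (apply Rmult_le_pos; nra). nra. }
  assert (0 <= c * J) by nra. nra.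
Qed.

Lemma rf_aP : P <= 2 * a.
Proof.
  destruct rf_basic as [HP [HQ [HP2 [HQ2 [Ha [Hb [HcQ [HbQ [HaP [HJ HJ2]]]]]]]]]].
  fold Q a in Hr. nra.
Qed.

Lemma rf_dotpq : Rabs (dot p q) <= a * b.
Proof. apply CS. Qed.

Lemma rf_G2 : c^2 * P <= 54 * Q * (2 * (P * Q - dot p q - c^2)).
Proof.
  destruct rf_basic as [HP [HQ [HP2 [HQ2 [Ha [Hb [HcQ [HbQ [HaP [HJ HJ2]]]]]]]]]].
  pose proof rf_aP. pose proof rf_dotpq. fold Q a in Hr.
  assert (Hd : dot p q <= a * b) by (pose proof (Rle_abs (dot p q)); lra).
  set (X := P * Q - a * b - c^2).
  assert (HXY : X * (P * Q + a * b + c^2) = c^2 * (a - b)^2).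
  { unfold X. replace (P * Q * (P * Q)) with (P^2 * Q^2) by ring.
    transitivity (P^2 * Q^2 - (a*b + c^2)^2); [ring|]. rewrite HP2, HQ2. ring. }
  assert (HcP : c <= P) by (apply en_ge_c; auto).
  assert (Hab0 : a * b <= P * Q) by (apply Rmult_le_compat; lra).
  assert (Hcc : c ^ 2 <= P * Q) by (simpl; rewrite Rmult_1_r; apply Rmult_le_compat; lra).
  assert (0 < P * Q) by (apply Rmult_lt_0_compat; lra).
  assert (0 <= a*b) by (apply Rmult_le_pos; lra).
  assert (HY : 0 < P * Q + a * b + c^2) by nra.
  assert (HY3 : P * Q + a * b + c^2 <= 3 * (P * Q)) by lra.
  assert (HX0 : 0 <= X).
  { destruct (Rle_dec 0 X); auto. assert (0 < (-X) * (P * Q + a * b + c^2)) by (apply Rmult_lt_0_compat; lra).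
    assert (0 <= c^2 * (a - b)^2) by (apply Rmult_le_pos; [nra| apply pow2_ge_0]). nra. }
  assert (Hab : P / 6 <= a - b) by lra.
  assert (Hab2 : P^2 / 36 <= (a - b)^2) by (assert (0 <= P/6) by lra; nra).
  assert (Hc2 : 0 <= c^2) by nra.
  assert (HH1 : c^2 * P^2 / 36 <= X * (3 * (P * Q))).
  { apply Rle_trans with (c^2 * (a-b)^2). 
    replace (c^2 * P^2 / 36) with (c^2 * (P^2/36)) by field. apply Rmult_le_compat_l; auto.
    rewrite <- HXY. apply Rmult_le_compat_l; auto. }
  assert (HH2 : c^2 * P <= 108 * Q * X).
  { apply (Rmult_le_reg_r P); auto. replace (c^2 * P * P) with (36 * (c^2 * P^2 / 36)) by field. nra. }
  assert (0 <= 108 * Q * (a * b - dot p q)) by (apply Rmult_le_pos; lra).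
  unfold X in HH2. nra.
Qed.

Lemma rf_G2up : 2 * (P * Q - dot p q - c^2) <= 4 * P * Q.
Proof.
  destruct rf_basic as [HP [HQ [HP2 [HQ2 [Ha [Hb [HcQ [HbQ [HaP [HJ HJ2]]]]]]]]]].
  pose proof rf_dotpq as H. pose proof (Rle_abs (- dot p q)) as H0. rewrite Rabs_Ropp in H0.
  assert (a * b <= P * Q) by (apply Rmult_le_compat; lra).
  assert (0 <= c^2) by nra. lra.
Qed.

Lemma rf_G2pos : 0 < 2 * (P * Q - dot p q - c^2).
Proof.
  destruct rf_basic as [HP [HQ [HP2 [HQ2 [Ha [Hb [HcQ [HbQ [HaP [HJ HJ2]]]]]]]]]].
  pose proof rf_G2. assert (0 < c^2) by nra. assert (0 < c^2 * P) by (apply Rmult_lt_0_compat; lra).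
  destruct (Rlt_dec 0 (2 * (P * Q - dot p q - c ^ 2))); auto.
  assert (54 * Q * (2 * (P * Q - dot p q - c ^ 2)) <= 0).
  { rewrite <- (Rmult_0_r (54 * Q)). apply Rmult_le_compat_l; lra. }
  lra.
Qed.

Lemma rf_Nn : P^2 <= 36 * dot (vadd p q) (vadd p q).
Proof.
  destruct rf_basic as [HP [HQ [HP2 [HQ2 [Ha [Hb [HcQ [HbQ [HaP [HJ HJ2]]]]]]]]]].
  pose proof rf_aP. pose proof rf_dotpq. fold Q a in Hr.
  assert (Hd : - dot p q <= a * b) by (pose proof (Rle_abs (- dot p q)); rewrite Rabs_Ropp in H1; lra).
  assert (E : dot (vadd p q) (vadd p q) = a^2 + 2 * dot p q + b^2).
  { unfold a, b; rewrite !vnorm_sq. unfold dot, vadd, mk3, v1, v2, v3; simpl. ring. }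
  rewrite E. assert (P / 6 <= a - b) by lra. nra.
Qed.

End RegFacts.

Lemma U_facts c p q : inU c q p ->
  0 < 2 * (en c p * en c q - dot p q - c^2) /\ 0 < dot (vadd p q) (vadd p q) /\ 0 < dot p p.
Proof.
  intros [Hc Hu].
  pose proof (en_pos c p Hc); pose proof (en_pos c q Hc).
  pose proof (en_sq c p); pose proof (en_sq c q); pose proof (vnorm_sq p); pose proof (vnorm_sq q).
  pose proof (vnorm_ge0 p); pose proof (vnorm_ge0 q). pose proof (en_ge_c c q Hc). pose proof (en_ge_c c p Hc).
  pose proof (vnorm_le_en c p Hc). pose proof (vnorm_le_en c q Hc). pose proof (CS p q) as HCS.
  set (P := en c p) in *. set (Q := en c q) in *. set (a := vnorm p) in *. set (b := vnorm q) in *.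
  pose proof (Rle_abs (dot p q)). pose proof (Rle_abs (- dot p q)) as Hm. rewrite Rabs_Ropp in Hm.
  assert (Hab : 0 < a - b) by lra.
  assert (Hab2 : 0 < (a - b)^2) by (apply pow_lt; lra).
  split; [|split].
  - set (X := P * Q - a * b - c^2).
    assert (HXY : X * (P * Q + a * b + c^2) = c^2 * (a - b)^2).
    { unfold X. transitivity (P^2 * Q^2 - (a*b + c^2)^2); [ring|]. rewrite H1, H2, <- H3, <- H4. ring. }
    assert (0 < P * Q) by (apply Rmult_lt_0_compat; lra).
    assert (0 <= a*b) by (apply Rmult_le_pos; lra).
    assert (0 < c^2) by nra.
    assert (HY : 0 < P * Q + a * b + c^2) by lra.
    assert (0 < c^2 * (a-b)^2) by (apply Rmult_lt_0_compat; lra).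
    assert (0 < X).
    { destruct (Rlt_dec 0 X); auto. assert (X * (P * Q + a * b + c^2) <= 0).
      { rewrite <- (Rmult_0_l (P * Q + a * b + c^2)). apply Rmult_le_compat_r; lra. } lra. }
    unfold X in *. lra.
  - assert (E : dot (vadd p q) (vadd p q) = a^2 + 2 * dot p q + b^2).
    { rewrite H3, H4. unfold dot, vadd, mk3, v1, v2, v3; simpl. ring. }
    rewrite E. assert (a * b >= 0) by (apply Rle_ge, Rmult_le_pos; lra). nra.
  - rewrite <- H3. apply pow_lt. lra.
Qed.

Lemma W_m2m2 c p : 1 <= c -> W c p (-2) (-2) = / (en c p ^ 2).
Proof. intro. pose proof (en_pos c p H). rewrite (W_int c p (-2) (-2)) by auto. simpl. field. lra. Qed.
Lemma W_m2m1 c p : 1 <= c -> W c p (-2) (-1) = / (c * en c p).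
Proof. intro. pose proof (en_pos c p H). rewrite (W_int c p (-2) (-1)) by auto. simpl. field. lra. Qed.
Lemma W_21 c p : 1 <= c -> W c p 2 1 = c * en c p.
Proof. intro. pose proof (en_pos c p H). rewrite (W_int c p 2 1) by auto. simpl. field. lra. Qed.
Lemma W_22 c p : 1 <= c -> W c p 2 2 = en c p ^ 2.
Proof. intro. pose proof (en_pos c p H). rewrite (W_int c p 2 2) by auto. simpl. field. lra. Qed.
Lemma W_m10 c p : 1 <= c -> W c p (-1) 0 = / c.
Proof. intro. pose proof (en_pos c p H). rewrite (W_int c p (-1) 0) by auto. simpl. field. lra. Qed.
Lemma W_10 c p : 1 <= c -> W c p 1 0 = c.
Proof. intro. pose proof (en_pos c p H). rewrite (W_int c p 1 0) by auto. simpl. field. Qed.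
Lemma W_20 c p : 1 <= c -> W c p 2 0 = c ^ 2.
Proof. intro. pose proof (en_pos c p H). rewrite (W_int c p 2 0) by auto. simpl. field. Qed.
Lemma W_00 c p : 1 <= c -> W c p 0 0 = 1.
Proof. intro. pose proof (en_pos c p H). rewrite (W_int c p 0 0) by auto. simpl. field. Qed.

Definition X (j : nat) : Fam := fun c q w x => coord j x.
Definition dotpp : Fam := fun c q w x => dot x x.
Definition c2 : Fam := fconst (fun c _ _ => c ^ 2).
Definition P0 : Fam := fun c q w x => en c x.
Definition vn : Fam := fun c q w x => vnorm x.
Definition Q0c : Fam := fconst (fun c q _ => en c q).
Definition iQ0c : Fam := fconst (fun c q _ => / en c q).
Definition qc (j : nat) : Fam := fconst (fun c q _ => coord j q).
Definition wc (j : nat) : Fam := fconst (fun c q w => coord j w).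
Definition G2 : Fam := fun c q w x => 2 * (en c x * en c q - dot x q - c ^ 2).
Definition Ss : Fam := fun c q w x => s_inv c x q.

Lemma dot_coord x y : dot x y = coord 0 x * coord 0 y + coord 1 x * coord 1 y + coord 2 x * coord 2 y.
Proof. reflexivity. Qed.

Lemma Sym_dotpp k : Sym k 2 2 dotpp.
Proof.
  apply (Sym_ext _ _ _ (fadd (fadd (fmul (X 0) (X 0)) (fmul (X 1) (X 1))) (fmul (X 2) (X 2)))).
  intros; reflexivity.
  replace 2 with (1 + 1) by ring.
  repeat apply Sym_add; apply Sym_mul; apply Sym_coord.
Qed.

Lemma bnd_c2 : bnd c2 2 0.
Proof.
  exists 1, 0%nat; split; [lra|]. intros c q w p [Hc _]. unfold c2, fconst. rewrite W_20 by auto.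
  rewrite Rabs_pos_eq by (apply pow_le; lra). simpl; lra.
Qed.

Lemma Sym_P0 k : Sym k 1 1 P0.
Proof.
  apply (Sym_ext _ _ _ (fsqrt (fadd c2 dotpp))). intros; reflexivity.
  apply (Sym_eq _ (2/2) (2/2)); try field.
  apply Sym_sqrt.
  - intros c q w p [Hc _]. unfold fadd, c2, fconst, dotpp. pose proof (dot_ge0 p). nra.
  - apply Sym_add; auto using Sym_dotpp. apply Sym_const. apply (bnd_w 2 0); try lra. apply bnd_c2.
  - exists 1, 0%nat; split; [lra|]. intros c q w p [Hc _]. rewrite W_m2m2 by auto.
    unfold finv, fadd, c2, fconst, dotpp. rewrite <- en_sq. pose proof (en_pos c p Hc).
    rewrite Rabs_pos_eq. lra. left; apply Rinv_0_lt_compat, pow_lt; lra.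
Qed.

Lemma bnd_iP0 : bnd (finv P0) (-1) (-1).
Proof.
  exists 1, 0%nat; split; [lra|]. intros c q w p [Hc _].
  rewrite (W_int c p (-1) (-1)) by auto. unfold finv, P0. pose proof (en_pos c p Hc).
  rewrite Rabs_pos_eq by (left; apply Rinv_0_lt_compat; lra). simpl. right; field; lra.
Qed.

Lemma Sym_iP0 k : Sym k (-1) (-1) (finv P0).
Proof.
  apply Sym_inv; auto using Sym_P0, bnd_iP0.
  intros c q w p [Hc _]. pose proof (en_pos c p Hc). unfold P0; lra.
Qed.

Lemma Sym_vn k : Sym k 1 1 vn.
Proof.
  apply (Sym_ext _ _ _ (fsqrt dotpp)). intros; reflexivity.
  apply (Sym_eq _ (2/2) (2/2)); try field.
  apply Sym_sqrt; auto using Sym_dotpp.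
  - intros c q w p Hu. apply (U_facts c p q Hu).
  - exists 4, 0%nat; split; [lra|]. intros c q w p [Hc [Hr _]]. rewrite W_m2m2 by auto.
    pose proof (rf_aP c p q Hc Hr). pose proof (en_pos c p Hc). pose proof (vnorm_sq p).
    unfold finv, dotpp. rewrite <- H1. 
    assert (0 < vnorm p) by lra.
    rewrite Rabs_pos_eq by (left; apply Rinv_0_lt_compat, pow_lt; lra).
    simpl. apply (Rmult_le_reg_r (vnorm p ^ 2 * en c p ^ 2)). apply Rmult_lt_0_compat; apply pow_lt; lra.
    field_simplify; try lra. nra.
Qed.

Lemma bnd_Q0c : bnd Q0c 1 0.
Proof.
  exists 1, 1%nat; split; [lra|]. intros c q w p [Hc _]. rewrite W_10 by auto.
  unfold Q0c, fconst. pose proof (en_pos c q Hc). rewrite Rabs_pos_eq by lra.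
  pose proof (rf_QJ c p q Hc). simpl. lra.
Qed.

Lemma bnd_iQ0c : bnd iQ0c (-1) 0.
Proof.
  exists 1, 0%nat; split; [lra|]. intros c q w p [Hc _]. rewrite W_m10 by auto.
  unfold iQ0c, fconst. pose proof (en_pos c q Hc). pose proof (en_ge_c c q Hc).
  rewrite Rabs_pos_eq by (left; apply Rinv_0_lt_compat; lra). simpl. rewrite !Rmult_1_l.
  apply Rinv_le_contravar; lra.
Qed.

Lemma bnd_qc j : bnd (qc j) 1 0.
Proof.
  exists 1, 1%nat; split; [lra|]. intros c q w p [Hc _]. rewrite W_10 by auto.
  unfold qc, fconst. pose proof (coord_le q j). pose proof (vnorm_le_en c q Hc).
  pose proof (rf_QJ c p q Hc). simpl. lra.
Qed.

Lemma bnd_wc j : bnd (wc j) 0 0.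
Proof.
  exists 1, 0%nat; split; [lra|]. intros c q w p [Hc [_ Hw]]. rewrite W_00 by auto.
  unfold wc, fconst. pose proof (coord_le w j). simpl. lra.
Qed.

Lemma Sym_dotpq k : Sym k 2 1 (fun c q w x => dot x q).
Proof.
  apply (Sym_ext _ _ _ (fadd (fadd (fmul (X 0) (qc 0)) (fmul (X 1) (qc 1))) (fmul (X 2) (qc 2)))).
  intros; reflexivity.
  replace 2 with (1 + 1) by ring. replace 1 with (1 + 0) at 3 by ring.
  repeat apply Sym_add; apply Sym_mul; try apply Sym_coord; apply Sym_const, bnd_qc.
Qed.

Lemma Sym_G2 k : Sym k 2 1 G2.
Proof.
  apply (Sym_ext _ _ _ (fmul (fconst (fun _ _ _ => 2)) (fadd (fadd (fmul P0 Q0c) (fmul (fconst (fun _ _ _ => -1)) (fun c q w x => dot x q))) (fmul (fconst (fun _ _ _ => -1)) c2)))).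
  intros; unfold G2, fmul, fadd, P0, Q0c, c2; unfold fconst; cbv beta; ring.
  apply (Sym_eq _ (0 + 2) (0 + 1)); try ring. apply Sym_mul. apply Sym_num.
  repeat apply Sym_add.
  - apply (Sym_eq _ (1 + 1) (1 + 0)); try ring. apply Sym_mul. apply Sym_P0. apply Sym_const, bnd_Q0c.
  - apply (Sym_eq _ (0 + 2) (0 + 1)); try ring. apply Sym_mul. apply Sym_num. apply Sym_dotpq.
  - apply (Sym_eq _ (0 + 2) (0 + 1)); try ring. apply Sym_mul. apply Sym_num.
    apply Sym_const. apply (bnd_w 2 0); try lra. apply bnd_c2.
Qed.

Lemma bnd_iG2 : bnd (finv G2) (-2) (-1).
Proof.
  exists 54, 1%nat; split; [lra|]. intros c q w p [Hc [Hr _]]. rewrite W_m2m1 by auto.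
  unfold finv, G2. pose proof (rf_G2 c p q Hc Hr). pose proof (rf_G2pos c p q Hc Hr).
  pose proof (rf_QJ c p q Hc). pose proof (en_pos c p Hc). pose proof (en_pos c q Hc).
  set (G := 2 * (en c p * en c q - dot p q - c ^ 2)) in *.
  rewrite Rabs_pos_eq by (left; apply Rinv_0_lt_compat; lra). rewrite pow_1.
  set (P := en c p) in *. set (Q := en c q) in *.
  assert (HcP : 0 < c * P) by nra.
  assert (H54 : c * P <= 54 * jap q * G).
  { assert (54 * Q * G <= 54 * (c * jap q) * G) by (apply Rmult_le_compat_r; lra).
    apply (Rmult_le_reg_l c); lra. }
  replace (54 * jap q * / (c * P)) with ((54 * jap q * G) * / (c * P) * / G) by (field; lra).
  rewrite <- (Rmult_1_l (/G)) at 1. apply Rmult_le_compat_r; [left; apply Rinv_0_lt_compat; lra|].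
  rewrite <- (Rinv_r (c*P)) by lra. apply Rmult_le_compat_r; [left; apply Rinv_0_lt_compat; lra | lra].
Qed.

Lemma G2_pos c q w p : inU c q p -> 0 < G2 c q w p.
Proof. intro Hu. apply (U_facts c p q Hu). Qed.

Lemma Sym_g k : Sym k 1 (1/2) (fsqrt G2).
Proof.
  apply (Sym_eq _ (2/2) (1/2)); try field. apply Sym_sqrt; auto using Sym_G2, bnd_iG2, G2_pos.
Qed.

Lemma Sym_Ss k : Sym k 2 1 Ss.
Proof.
  apply (Sym_ext _ _ _ (fadd G2 (fmul (fconst (fun _ _ _ => 4)) c2))).
  intros; unfold Ss, s_inv, G2, fadd, fmul, c2; unfold fconst; cbv beta; ring.
  apply Sym_add. apply Sym_G2. apply (Sym_eq _ (0 + 2) (0 + 1)); try ring. apply Sym_mul. apply Sym_num.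
  apply Sym_const. apply (bnd_w 2 0); try lra. apply bnd_c2.
Qed.

Lemma Ss_G2 c q w p : Ss c q w p = G2 c q w p + 4 * c ^ 2.
Proof. unfold Ss, s_inv, G2; ring. Qed.

Lemma bnd_iSs : bnd (finv Ss) (-2) (-1).
Proof.
  destruct bnd_iG2 as [C [n [HC HB]]]. exists C, n; split; auto. intros c q w p HR.
  eapply Rle_trans; [|apply (HB c q w p HR)]. unfold finv. rewrite Ss_G2.
  destruct HR as [Hc [Hr _]].
  pose proof (rf_G2pos c p q Hc Hr). fold (G2 c q w p) in H.
  assert (0 < c^2) by nra.
  rewrite !Rabs_pos_eq by (left; apply Rinv_0_lt_compat; lra).
  apply Rinv_le_contravar; lra.
Qed.

Lemma Ss_pos c q w p : inU c q p -> 0 < Ss c q w p.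
Proof. intro Hu. rewrite Ss_G2. pose proof (G2_pos c q w p Hu). destruct Hu as [Hc _]. nra. Qed.

Lemma Sym_sq k : Sym k 1 (1/2) (fsqrt Ss).
Proof.
  apply (Sym_eq _ (2/2) (1/2)); try field. apply Sym_sqrt; auto using Sym_Ss, bnd_iSs, Ss_pos.
Qed.

Lemma Sym_isq k : Sym k (-1) (-(1/2)) (finv (fsqrt Ss)).
Proof.
  apply (Sym_eq _ (-(2/2)) (-(1/2))); try field. apply Sym_isqrt; auto using Sym_Ss, bnd_iSs, Ss_pos.
Qed.

Definition vphi : Fam := fun c q w x => v_phi c x q.

Lemma Sym_vphi k : Sym k 1 0 vphi.
Proof.
  apply (Sym_ext _ _ _ (fmul (fmul (fmul (fmul (fconst (fun c _ _ => c / 4)) (fsqrt G2)) (fsqrt Ss)) (finv P0)) iQ0c)).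
  - intros c q w p Hu. unfold vphi, v_phi, fmul, fsqrt, finv, iQ0c, P0, G2, Ss, g_rel. unfold fconst; cbv beta.
    unfold Rdiv. rewrite Rinv_mult. ring.
  - apply (Sym_eq _ (1 + 1 + 1 + -1 + -1) (0 + 1/2 + 1/2 + -1 + 0)); try field.
    repeat apply Sym_mul; auto using Sym_g, Sym_sq, Sym_iP0.
    + apply Sym_const. exists (1/4), 0%nat; split; [lra|]. intros c q w p [Hc _]. rewrite W_10 by auto.
      unfold fconst. rewrite Rabs_pos_eq by lra. simpl; lra.
    + apply Sym_const, bnd_iQ0c.
Qed.

Lemma bnd_ivphi : bnd (finv vphi) (-1) 0.
Proof.
  exists 216, 2%nat; split; [lra|]. intros c q w p [Hc [Hr _]]. rewrite W_m10 by auto.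
  unfold finv, vphi, v_phi.
  pose proof (rf_G2 c p q Hc Hr). pose proof (rf_G2pos c p q Hc Hr).
  pose proof (rf_QJ c p q Hc). pose proof (en_pos c p Hc). pose proof (en_pos c q Hc).
  fold (G2 c q w p) in *. unfold g_rel, s_inv. fold (G2 c q w p) in *.
  replace (2 * (en c p * en c q - dot p q + c ^ 2)) with (Ss c q w p) by reflexivity.
  rewrite Ss_G2.
  set (G := G2 c q w p) in *. set (P := en c p) in *. set (Q := en c q) in *.
  assert (0 < c^2) by nra.
  assert (Hg : 0 < sqrt G) by (apply sqrt_lt_R0; lra).
  assert (Hgg : sqrt G * sqrt G = G) by (apply sqrt_sqrt; lra).
  assert (Hs : sqrt G <= sqrt (G + 4 * c^2)) by (apply sqrt_le_1_alt; lra).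
  assert (Hgs : G <= sqrt G * sqrt (G + 4 * c^2)) by nra.
  assert (Hpos : 0 < c / 4 * (sqrt G * sqrt (G + 4 * c ^ 2)) / (P * Q)).
  { unfold Rdiv. repeat apply Rmult_lt_0_compat; try lra. apply Rinv_0_lt_compat; nra. }
  rewrite Rabs_pos_eq by (left; apply Rinv_0_lt_compat; auto).
  set (Z := sqrt G * sqrt (G + 4 * c ^ 2)) in *.
  replace (/ (c / 4 * Z / (P * Q))) with (4 * P * Q / (c * Z)) by (field; repeat split; lra).
  assert (HQc : Q / c <= jap q) by (apply (Rmult_le_reg_r c); [lra|]; field_simplify; lra).
  (* 4PQ/(cZ) <= 4PQ/(cG) <= 4PQ*54Q/(c*c^2 P) = 216 (Q/c)^2 / c *)
  apply Rle_trans with (4 * P * Q / (c * G)).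
  { unfold Rdiv. apply Rmult_le_compat_l. nra. apply Rinv_le_contravar; nra. }
  apply (Rmult_le_reg_r (c * G)). nra.
  replace (4 * P * Q / (c * G) * (c * G)) with (4 * P * Q) by (field; lra).
  assert (E : 216 * jap q ^ 2 * / c * (c * G) = 216 * jap q ^ 2 * G) by (field; lra). rewrite E.
  assert (Q^2 <= c^2 * jap q ^ 2).
  { assert (0 <= Q / c) by (unfold Rdiv; apply Rmult_le_pos; [lra| left; apply Rinv_0_lt_compat; lra]).
    assert ((Q/c)^2 <= jap q ^ 2) by (apply pow_incr; lra).
    replace (Q^2) with (c^2 * (Q/c)^2) by (field; lra). apply Rmult_le_compat_l; lra. }
  (* c^2 P <= 54 Q G  ->  4PQ * c^2 <= 216 Q^2 G <= 216 c^2 J^2 G *)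
  assert (4 * P * Q * c^2 <= 216 * Q^2 * G) by nra.
  assert (216 * Q^2 * G <= 216 * c^2 * jap q ^ 2 * G) by nra.
  apply (Rmult_le_reg_r (c^2)); lra.
Qed.

Section Chi.
Variable chi : R -> R.
Hypothesis Hchi : cutoff chi.

Definition phi1 : Fam := fun c q w x => en c x / c.
Definition phi2 : Fam := fun c q w x => 2 / 3 * vnorm x / en c q.

Lemma Sym_phi1 k : Sym k 0 1 phi1.
Proof.
  apply (Sym_ext _ _ _ (fmul (fconst (fun c _ _ => / c)) P0)).
  intros; unfold phi1, fmul, P0, fconst; unfold Rdiv; ring.
  apply (Sym_eq _ (-1 + 1) (0 + 1)); try ring. apply Sym_mul; [|apply Sym_P0].
  apply Sym_const. exists 1, 0%nat; split; [lra|]. intros c q w p [Hc _]. rewrite W_m10 by auto.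
  unfold fconst. rewrite Rabs_pos_eq by (left; apply Rinv_0_lt_compat; lra). simpl; lra.
Qed.

Lemma Sym_phi2 k : Sym k 0 1 phi2.
Proof.
  apply (Sym_ext _ _ _ (fmul (fconst (fun c q _ => 2 / 3 / en c q)) vn)).
  intros; unfold phi2, fmul, vn, fconst; unfold Rdiv; ring.
  apply (Sym_eq _ (-1 + 1) (0 + 1)); try ring. apply Sym_mul; [|apply Sym_vn].
  apply Sym_const. exists 1, 0%nat; split; [lra|]. intros c q w p [Hc _]. rewrite W_m10 by auto.
  unfold fconst. pose proof (en_pos c q Hc). pose proof (en_ge_c c q Hc).
  rewrite Rabs_pos_eq by (unfold Rdiv; apply Rmult_le_pos; [lra| left; apply Rinv_0_lt_compat; lra]).
  simpl. rewrite !Rmult_1_l. unfold Rdiv.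
  apply Rle_trans with (/ en c q). assert (0 < / en c q) by (apply Rinv_0_lt_compat; lra). nra.
  apply Rinv_le_contravar; lra.
Qed.

Definition omchi (phi : Fam) : Fam := fun c q w x => 1 - chi (phi c q w x).

Lemma Sym_omchi k phi : Sym k 0 1 phi ->
  (forall c q w p, Reg c q w p -> 0 <= phi c q w p) ->
  (exists K n0, 0 <= K /\ forall c q w p, Reg c q w p -> phi c q w p <= 2 -> en c p / c <= K * jap q ^ n0) ->
  Sym k 0 0 (omchi phi).
Proof.
  intros H1 H2 H3.
  apply (Sym_ext _ _ _ (fadd (fconst (fun _ _ _ => 1)) (fmul (fconst (fun _ _ _ => -1)) (fun c q w x => Derive_n chi 0 (phi c q w x))))).
  intros; unfold omchi, fadd, fmul, fconst; simpl; ring.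
  apply Sym_add. apply Sym_num.
  apply (Sym_eq _ (0 + 0) (0 + - INR 0)); try (simpl; ring). apply Sym_mul. apply Sym_num.
  apply Sym_chi; auto.
Qed.

Definition chiAc : Fam := fun c q w x => chi_Ac chi c x q.

Lemma Sym_chiAc k : Sym k 0 0 chiAc.
Proof.
  apply (Sym_ext _ _ _ (fmul (omchi phi1) (omchi phi2))). intros; reflexivity.
  apply (Sym_eq _ (0 + 0) (0 + 0)); try ring. apply Sym_mul; apply Sym_omchi.
  - apply Sym_phi1.
  - intros c q w p [Hc _]. unfold phi1. pose proof (en_pos c p Hc). unfold Rdiv.
    apply Rmult_le_pos; [lra| left; apply Rinv_0_lt_compat; lra].
  - exists 2, 0%nat; split; [lra|]. intros. unfold phi1 in H0. simpl; lra.
  - apply Sym_phi2.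
  - intros c q w p [Hc _]. unfold phi2. pose proof (en_pos c q Hc). pose proof (vnorm_ge0 p). unfold Rdiv.
    apply Rmult_le_pos; [nra| left; apply Rinv_0_lt_compat; lra].
  - exists 4, 1%nat; split; [lra|]. intros c q w p [Hc [Hr _]] H. unfold phi2 in H.
    pose proof (en_pos c q Hc). pose proof (en_pos c p Hc). pose proof (rf_QJ c p q Hc).
    pose proof (en_sq c p). pose proof (en_sq c q). pose proof (vnorm_sq p). pose proof (vnorm_ge0 p).
    pose proof (en_ge_c c q Hc). pose proof (dot_ge0 q).
    assert (Ha : vnorm p <= 3 * en c q).
    { apply (Rmult_le_reg_r (2 / 3 / en c q)). unfold Rdiv; apply Rmult_lt_0_compat; [lra| apply Rinv_0_lt_compat; lra].
      replace (3 * en c q * (2 / 3 / en c q)) with 2 by (field; lra). unfold Rdiv in *. lra. }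
    assert (HP : en c p <= 4 * en c q) by nra.
    apply (Rmult_le_reg_r c); [lra|]. replace (en c p / c * c) with (en c p) by (field; lra).
    simpl. nra.
Qed.

Definition F1 : Fam := fun c q w x => v_phi c x q * chi_Ac chi c x q.

Lemma Sym_F1 k : Sym k 1 0 F1.
Proof.
  apply (Sym_eq _ (1 + 0) (0 + 0)); try ring. apply (Sym_mul _ _ _ _ _ vphi chiAc).
  apply Sym_vphi. apply Sym_chiAc.
Qed.

End Chi.

Definition xq (j : nat) : Fam := fadd (X j) (qc j).
Definition Dw : Fam := fun c q w x => dot (vadd x q) w.
Definition Nn : Fam := fun c q w x => dot (vadd x q) (vadd x q).

Lemma coord_vadd j a b : coord j (vadd a b) = coord j a + coord j b.
Proof. destruct j as [|[|j]]; reflexivity. Qed.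
Lemma coord_vscal j r a : coord j (vscal r a) = r * coord j a.
Proof. destruct j as [|[|j]]; reflexivity. Qed.

Lemma Sym_xq k j : Sym k 1 1 (xq j).
Proof.
  apply Sym_add. apply Sym_coord. apply Sym_const. apply (bnd_w 1 0); try lra. apply bnd_qc.
Qed.

Lemma Sym_Dw k : Sym k 1 1 Dw.
Proof.
  apply (Sym_ext _ _ _ (fadd (fadd (fmul (xq 0) (wc 0)) (fmul (xq 1) (wc 1))) (fmul (xq 2) (wc 2)))).
  intros; unfold Dw; rewrite dot_coord, !coord_vadd; reflexivity.
  apply (Sym_eq _ (1 + 0) (1 + 0)); try ring.
  repeat apply Sym_add; apply Sym_mul; try apply Sym_xq; apply Sym_const, bnd_wc.
Qed.

Lemma Sym_Nn k : Sym k 2 2 Nn.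
Proof.
  apply (Sym_ext _ _ _ (fadd (fadd (fmul (xq 0) (xq 0)) (fmul (xq 1) (xq 1))) (fmul (xq 2) (xq 2)))).
  intros; unfold Nn; rewrite dot_coord, !coord_vadd; reflexivity.
  apply (Sym_eq _ (1 + 1) (1 + 1)); try ring.
  repeat apply Sym_add; apply Sym_mul; apply Sym_xq.
Qed.

Lemma bnd_iNn : bnd (finv Nn) (-2) (-2).
Proof.
  exists 36, 0%nat; split; [lra|]. intros c q w p [Hc [Hr _]]. rewrite W_m2m2 by auto.
  unfold finv, Nn. pose proof (rf_Nn c p q Hc Hr). pose proof (en_pos c p Hc).
  assert (0 < en c p ^ 2) by (apply pow_lt; lra).
  assert (0 < dot (vadd p q) (vadd p q)) by lra.
  rewrite Rabs_pos_eq by (left; apply Rinv_0_lt_compat; lra).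
  replace (36 * jap q ^ 0 * / en c p ^ 2) with (/ (en c p ^ 2 / 36)) by (simpl; field; lra).
  apply Rinv_le_contravar; lra.
Qed.

Lemma Sym_iNn k : Sym k (-2) (-2) (finv Nn).
Proof.
  apply Sym_inv; auto using Sym_Nn, bnd_iNn.
  intros c q w p Hu. apply Rgt_not_eq. apply (U_facts c p q Hu).
Qed.

Definition Tg : Fam := fadd (fmul (fmul (fsqrt G2) (fadd P0 Q0c)) (finv (fsqrt Ss))) (fmul (fconst (fun _ _ _ => -1)) (fsqrt G2)).

Lemma Sym_Tg k : Sym k 1 1 Tg.
Proof.
  apply Sym_add.
  - apply (Sym_eq _ (1 + 1 + -1) (1/2 + 1 + - (1/2))); try field.
    apply Sym_mul; [apply Sym_mul|]. apply Sym_g. apply Sym_add. apply Sym_P0.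
    apply Sym_const. apply (bnd_w 1 0); try lra. apply bnd_Q0c. apply Sym_isq.
  - apply (Sym_w _ (0 + 1) (0 + 1/2)); try lra. apply Sym_mul. apply Sym_num. apply Sym_g.
Qed.

Definition post_fam (sg : R) (j : nat) : Fam :=
  fadd (fadd (fmul (fconst (fun _ _ _ => /2)) (xq j)) (fmul (fmul (fconst (fun _ _ _ => sg / 2)) (fsqrt G2)) (wc j)))
       (fmul (fmul (fmul (fmul (fconst (fun _ _ _ => sg / 2)) Tg) Dw) (finv Nn)) (xq j)).

Lemma Sym_post k sg j : Sym k 1 1 (post_fam sg j).
Proof.
  apply Sym_add; [apply Sym_add|].
  - apply (Sym_eq _ (0 + 1) (0 + 1)); try ring. apply Sym_mul. apply Sym_num. apply Sym_xq.
  - apply (Sym_w _ (0 + 1 + 0) (0 + 1/2 + 0)); try lra. apply Sym_mul; [apply Sym_mul|].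
    apply Sym_num. apply Sym_g. apply Sym_const, bnd_wc.
  - apply (Sym_eq _ (0 + 1 + 1 + -2 + 1) (0 + 1 + 1 + -2 + 1)); try ring.
    repeat apply Sym_mul; auto using Sym_num, Sym_Tg, Sym_Dw, Sym_iNn, Sym_xq.
Qed.

Lemma pp_eq c q w p j : inU c q p ->
  coord j (p_post c p q w) = post_fam 1 j c q w p /\ coord j (q_post c p q w) = post_fam (-1) j c q w p.
Proof.
  intro Hu. pose proof (U_facts c p q Hu) as [HG [HN Hd]].
  pose proof (Ss_pos c q w p Hu) as HS. unfold Ss in HS.
  assert (Hsq : 0 < sqrt (s_inv c p q)) by (apply sqrt_lt_R0; auto).
  unfold p_post, q_post, post_dir. repeat rewrite ?coord_vadd, ?coord_vscal. rewrite vnorm_sq.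
  unfold post_fam, Tg, xq, X, qc, wc, Dw, Nn, G2, P0, Q0c, Ss.
  unfold fadd, fmul, finv, fsqrt, fconst. cbv beta.
  unfold gamma0, g_rel.
  split; field; lra.
Qed.

Definition pco (j : nat) : Fam := fun c q w x => coord j (p_post c x q w).
Definition qco (j : nat) : Fam := fun c q w x => coord j (q_post c x q w).

Lemma Sym_pco k j : Sym k 1 1 (pco j).
Proof. apply (Sym_ext _ _ _ (post_fam 1 j)). intros; symmetry; apply pp_eq; auto. apply Sym_post. Qed.
Lemma Sym_qco k j : Sym k 1 1 (qco j).
Proof. apply (Sym_ext _ _ _ (post_fam (-1) j)). intros; symmetry; apply pp_eq; auto. apply Sym_post. Qed.

Lemma vnorm_mk3 a b c0 : vnorm (mk3 a b c0) <= Rabs a + Rabs b + Rabs c0.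
Proof.
  unfold vnorm, dot, mk3, v1, v2, v3; simpl.
  pose proof (Rabs_pos a); pose proof (Rabs_pos b); pose proof (Rabs_pos c0).
  rewrite <- (sqrt_pow2 (Rabs a + Rabs b + Rabs c0)) by lra.
  apply sqrt_le_1_alt.
  assert (a * a = Rabs a * Rabs a) by (rewrite <- Rabs_mult; symmetry; apply Rabs_pos_eq; nra).
  assert (b * b = Rabs b * Rabs b) by (rewrite <- Rabs_mult; symmetry; apply Rabs_pos_eq; nra).
  assert (c0 * c0 = Rabs c0 * Rabs c0) by (rewrite <- Rabs_mult; symmetry; apply Rabs_pos_eq; nra).
  nra.
Qed.

Definition Gb (f : R -> vec3 -> vec3 -> vec3 -> R) : Prop :=
  exists C n, 0 <= C /\ forall c q w p, Reg c q w p -> f c q w p <= C * jap q ^ n.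

Lemma Gb_add f g : Gb f -> Gb g -> Gb (fun c q w p => f c q w p + g c q w p).
Proof.
  intros [C1 [n1 [HC1 HB1]]] [C2 [n2 [HC2 HB2]]].
  exists (C1 + C2), (n1 + n2)%nat; split; [lra|]. intros c q w p HR.
  pose proof (HB1 c q w p HR); pose proof (HB2 c q w p HR).
  pose proof (jap_ge1 q).
  assert (jap q ^ n1 <= jap q ^ (n1 + n2)) by (apply Rle_pow; auto; lia).
  assert (jap q ^ n2 <= jap q ^ (n1 + n2)) by (apply Rle_pow; auto; lia).
  assert (C1 * jap q ^ n1 <= C1 * jap q ^ (n1 + n2)) by (apply Rmult_le_compat_l; auto).
  assert (C2 * jap q ^ n2 <= C2 * jap q ^ (n1 + n2)) by (apply Rmult_le_compat_l; auto).
  lra.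
Qed.

Lemma Gb_le f g : (forall c q w p, Reg c q w p -> f c q w p <= g c q w p) -> Gb g -> Gb f.
Proof.
  intros H [C [n [HC HB]]]. exists C, n; split; auto. intros. eapply Rle_trans; eauto.
Qed.

Lemma Gb_bnd F d m : bnd F d m -> d <= 0 -> m <= 0 -> Gb (fun c q w p => Rabs (F c q w p)).
Proof.
  intros [C [n [HC HB]]] Hd Hm. exists C, n; split; auto. intros c q w p HR.
  eapply Rle_trans; [apply HB; auto|].
  rewrite <- (Rmult_1_r (C * jap q ^ n)) at 2. apply Rmult_le_compat_l.
  apply Rmult_le_pos; auto. apply pow_le; pose proof (jap_ge1 q); lra.
  rewrite <- (W_00 c p) by apply HR. apply W_mono; auto. apply HR.
Qed.

Lemma Gb_dbeta b1 b2 b3 F d m : Sym (b1 + b2 + b3 + 0) d m F ->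
  d <= INR (b1 + b2 + b3) -> m <= INR (b1 + b2 + b3) ->
  Gb (fun c q w p => Rabs (dbeta (b1, b2, b3) (F c q w) p)).
Proof.
  intros H Hd Hm. pose proof (Sym_dbeta b1 b2 b3 0 d m F H) as H1.
  apply (Gb_bnd _ _ _ H1); lra.
Qed.

Theorem lemmaA3 (chi : R -> R) (Hchi : cutoff chi) :
  forall beta : multi_index, beta <> (0%nat, 0%nat, 0%nat) ->
  exists n : nat, (1 <= n)%nat /\
  exists C : R, 0 < C /\
  forall (c : R) (p q w : vec3),
    1 <= c -> 3 / 2 * en c q <= vnorm p -> vnorm w = 1 ->
    Rabs (dbeta beta (fun x => v_phi c x q * chi_Ac chi c x q) p) / Rabs (v_phi c p q)
    + vnorm (dbeta_vec beta (fun x => p_post c x q w) p)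
    + vnorm (dbeta_vec beta (fun x => q_post c x q w) p)
    <= C * jap q ^ n.
Proof.
  intros [[b1 b2] b3] Hb.
  assert (Hnb : (1 <= b1 + b2 + b3)%nat).
  { destruct b1, b2, b3; simpl; try lia. exfalso; apply Hb; reflexivity. }
  assert (HnR : 1 <= INR (b1 + b2 + b3)) by (apply (le_INR 1); auto).
  assert (GT1 : Gb (fun c q w p => Rabs (fmul (fun c q w => dbeta (b1, b2, b3) (F1 chi c q w)) (finv vphi) c q w p))).
  { apply (Gb_bnd _ (1 - INR (b1 + b2 + b3) + -1) (0 - INR (b1 + b2 + b3) + 0)); try lra.
    apply bnd_mul. apply (Sym_dbeta b1 b2 b3 0 1 0 (F1 chi)). apply Sym_F1; auto. apply bnd_ivphi. }
  assert (GP : forall j, Gb (fun c q w p => Rabs (dbeta (b1, b2, b3) (pco j c q w) p))).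
  { intro j. apply (Gb_dbeta _ _ _ _ 1 1); try lra. apply Sym_pco. }
  assert (GQ : forall j, Gb (fun c q w p => Rabs (dbeta (b1, b2, b3) (qco j c q w) p))).
  { intro j. apply (Gb_dbeta _ _ _ _ 1 1); try lra. apply Sym_qco. }
  assert (Gall : Gb (fun c q w p =>
     Rabs (fmul (fun c q w => dbeta (b1, b2, b3) (F1 chi c q w)) (finv vphi) c q w p)
     + (Rabs (dbeta (b1, b2, b3) (pco 0 c q w) p) + Rabs (dbeta (b1, b2, b3) (pco 1 c q w) p) + Rabs (dbeta (b1, b2, b3) (pco 2 c q w) p))
     + (Rabs (dbeta (b1, b2, b3) (qco 0 c q w) p) + Rabs (dbeta (b1, b2, b3) (qco 1 c q w) p) + Rabs (dbeta (b1, b2, b3) (qco 2 c q w) p)))).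
  { repeat apply Gb_add; auto. }
  destruct Gall as [C [n [HC HB]]].
  exists (S n); split; [lia|]. exists (C + 1); split; [lra|].
  intros c p q w Hc Hr Hw.
  assert (HR : Reg c q w p) by (repeat split; auto).
  pose proof (HB c q w p HR) as H.
  assert (E1 : Rabs (dbeta (b1, b2, b3) (fun x => v_phi c x q * chi_Ac chi c x q) p) / Rabs (v_phi c p q)
     = Rabs (fmul (fun c q w => dbeta (b1, b2, b3) (F1 chi c q w)) (finv vphi) c q w p)).
  { unfold fmul, finv, vphi, F1. rewrite Rabs_mult, Rabs_inv. reflexivity. }
  rewrite E1.
  pose proof (vnorm_mk3 (dbeta (b1, b2, b3) (pco 0 c q w) p) (dbeta (b1, b2, b3) (pco 1 c q w) p) (dbeta (b1, b2, b3) (pco 2 c q w) p)) as V1.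
  pose proof (vnorm_mk3 (dbeta (b1, b2, b3) (qco 0 c q w) p) (dbeta (b1, b2, b3) (qco 1 c q w) p) (dbeta (b1, b2, b3) (qco 2 c q w) p)) as V2.
  change (vnorm (dbeta_vec (b1, b2, b3) (fun x => p_post c x q w) p)) with
    (vnorm (mk3 (dbeta (b1, b2, b3) (pco 0 c q w) p) (dbeta (b1, b2, b3) (pco 1 c q w) p) (dbeta (b1, b2, b3) (pco 2 c q w) p))).
  change (vnorm (dbeta_vec (b1, b2, b3) (fun x => q_post c x q w) p)) with
    (vnorm (mk3 (dbeta (b1, b2, b3) (qco 0 c q w) p) (dbeta (b1, b2, b3) (qco 1 c q w) p) (dbeta (b1, b2, b3) (qco 2 c q w) p))).
  pose proof (jap_ge1 q).
  assert (jap q ^ n <= jap q ^ S n) by (apply Rle_pow; auto).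
  assert (0 <= jap q ^ n) by (apply pow_le; lra).
  assert (C * jap q ^ n <= (C + 1) * jap q ^ S n) by (apply Rmult_le_compat; lra).
  lra.
Qed.
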